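(* Let $u_\pm\in L^\infty(\mathbb{R};\mathbb{R})$ and let $\mathcal{L}=\begin{pmatrix} -u_- & i\partial_x\\ i\partial_x & -u_+\end{pmatrix}:H^1(\mathbb{R};\mathbb{C}^2)\to L^2(\mathbb{R};\mathbb{C}^2)$. If $\lambda\in\mathbb{R}$ is an eigenvalue of $\mathcal{L}$ (i.e. $\mathcal{L}\Psi=\lambda\Psi$ for some $\Psi\in H^1(\mathbb{R};\mathbb{C}^2)\setminus\{0\}$), then for every $c\in\mathbb{R}$, $$c-\lambda\le \|(u_-+c)^{(+)}\|_{L^\infty}\quad\text{or}\quad c+\lambda\le \|(u_+-c)^{(-)}\|_{L^\infty}.$$ In particular, if $u_+\ge c$ and $-u_-\ge c$ a.e. for some $c>0$, then $\mathcal{L}$ has no eigenvalues in $(-c,c)$.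
   Context: For a real function $f$, $f^{(+)}=\max\{f,0\}$ and $f^{(-)}=\max\{-f,0\}$ denote its positive and negative parts, so $f=f^{(+)}-f^{(-)}$. *)

(* Defs.v *)
From HB Require Import structures.
From mathcomp Require Import all_boot all_order all_algebra.
From mathcomp Require Import all_classical all_reals all_analysis.
From mathcomp Require Import complex.
Set Implicit Arguments. Unset Strict Implicit. Unset Printing Implicit Defensive.
Import Order.TTheory GRing.Theory Num.Theory.
Local Open Scope classical_set_scope.
Local Open Scope ring_scope.

Section Defs.
Variable R : realType.
Local Notation mu := (@lebesgue_measure R).

Definition pospart (f : R -> R) : R -> R := fun x => Num.max (f x) 0.
Definition negpart (f : R -> R) : R -> R := fun x => Num.max (- f x) 0.

Definition Linf_norm (f : R -> R) : \bar R := 'N[mu]_(+oo%E)[EFin \o f].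

Definition in_Linf (f : R -> R) : Prop :=
  measurable_fun [set: R] f /\ (Linf_norm f < +oo)%E.

Definition in_L2 (f : R -> R) : Prop :=
  measurable_fun [set: R] f /\ (\int[mu]_x ((f x) ^+ 2)%:E < +oo)%E.

Definition in_L2C (f : R -> R[i]) : Prop :=
  in_L2 (fun x => complex.Re (f x)) /\ in_L2 (fun x => complex.Im (f x)).

(* H^1(R; C): f is (a representative of) an L^2 function having an L^2
   derivative g in the sense f(y) - f(x) = int_x^y g for all x <= y
   (the absolutely continuous representative). *)
Definition is_H1_deriv (f g : R -> R[i]) : Prop :=
  in_L2C f /\ in_L2C g /\
  forall x y : R, x <= y ->
    complex.Re (f y) - complex.Re (f x)
      = \int[mu]_(t in `[x, y]) complex.Re (g t) /\
    complex.Im (f y) - complex.Im (f x)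
      = \int[mu]_(t in `[x, y]) complex.Im (g t).

Definition is_eigenvalue (um up : R -> R) (lam : R) : Prop :=
  exists (psi1 psi2 dpsi1 dpsi2 : R -> R[i]),
    is_H1_deriv psi1 dpsi1 /\ is_H1_deriv psi2 dpsi2 /\
    ~ (\forall x \ae mu, psi1 x = 0 /\ psi2 x = 0) /\
    (\forall x \ae mu,
       - ((um x)%:C)%C * psi1 x + 'i%C * dpsi2 x = (lam%:C)%C * psi1 x /\
       'i%C * dpsi1 x - ((up x)%:C)%C * psi2 x = (lam%:C)%C * psi2 x).

End Defs.

(* Main.v *)
Require Import Defs.
From HB Require Import structures.
From mathcomp Require Import all_boot all_order all_algebra.
From mathcomp Require Import all_classical all_reals all_analysis.
From mathcomp Require Import complex.
From mathcomp Require Import measurable_realfun ess_sup_inf ring lra.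
Import Order.TTheory GRing.Theory Num.Theory.
Import numFieldNormedType.Exports.
Local Open Scope classical_set_scope.
Local Open Scope ring_scope.
Section Aux.

Variable R : realType.
Local Notation mu := (@lebesgue_measure R).

Lemma locint (f : R -> R) : measurable_fun setT f ->
  (\int[mu]_x ((f x) ^+ 2)%:E < +oo)%E ->
  forall a b : R, mu.-integrable `[a, b] (EFin \o f).
Proof.
move=> mf fint a b.
have mab : measurable (`[a, b] : set R) by exact: measurable_itv.
apply: (@le_integrable _ _ _ mu _ mab _ (fun x => (1 + f x ^+ 2)%:E)).
- by apply/measurable_EFinP; exact: measurable_funS mf.
- move=> x _ /=; rewrite lee_fin (@ger0_norm _ (1 + _)); last first.
    by rewrite addr_ge0 // sqr_ge0.
  have h := sqr_ge0 (`|f x| - 1).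
  have : `|f x| ^+ 2 = f x ^+ 2 by rewrite real_normK // num_real.
  by nra.
- apply/integrableP; split.
    apply/measurable_EFinP; apply: measurable_funD; first exact: measurable_cst.
    by apply: measurable_funX; exact: measurable_funS mf.
  have mf2 : measurable_fun `[a, b] (fun x => (f x ^+ 2)%:E).
    by apply/measurable_EFinP; apply: measurable_funX; exact: measurable_funS mf.
  rewrite (@le_lt_trans _ _ (\int[mu]_(x in `[a, b]) ((cst (1%:E : \bar R)) x + (f x ^+ 2)%:E))%E) //.
    apply: ge0_le_integral => //.
    + by apply: measurableT_comp => //; apply/measurable_EFinP; apply: measurable_funD;
        [exact: measurable_cst| apply: measurable_funX; exact: measurable_funS mf].
    + exact: (@emeasurable_funD _ _ _ _ (cst (1%:E : \bar R)) (fun x => (f x ^+ 2)%:E)).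
    + move=> x _ /=; rewrite ger0_norm ?EFinD //.
      by rewrite addr_ge0 // sqr_ge0.
  have f20 : forall x, [set` `[a, b]] x -> (0 <= (f x ^+ 2)%:E)%E.
    by move=> x _; rewrite lee_fin sqr_ge0.
  have f10 : forall x, [set` `[a, b]] x -> (0 <= (cst (1%:E : \bar R)) x)%E.
    by move=> ? ?; rewrite /= lee_fin.
  rewrite (@ge0_integralD _ _ _ mu _ mab (cst (1%:E : \bar R)) (fun x => (f x ^+ 2)%:E) f10 (measurable_cst _) f20 mf2).
  rewrite integral_cst // mul1e.
  apply: lte_add_pinfty.
    have := lebesgue_measure_itv `[a, b]; rewrite /= => ->.
    by case: ifP => _ //; rewrite -EFinD ltry.
  apply: le_lt_trans fint; apply: ge0_subset_integral => //.
  * by apply/measurable_EFinP; exact: measurable_funX.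
  * by move=> x _; rewrite lee_fin sqr_ge0.
Qed.


Lemma ae_mono (P Q : R -> Prop) : (forall x, P x -> Q x) ->
  (\forall x \ae mu, P x) -> (\forall x \ae mu, Q x).
Proof. move=> PQ; have FF := ae_filter_ringOfSetsType mu; apply: filterS => x; exact: PQ. Qed.

Lemma ae_mono2 (P Q S : R -> Prop) : (forall x, P x -> Q x -> S x) ->
  (\forall x \ae mu, P x) -> (\forall x \ae mu, Q x) -> (\forall x \ae mu, S x).
Proof. move=> PQ; have FF := ae_filter_ringOfSetsType mu; apply: filterS2 => x; exact: PQ. Qed.

Lemma ae_Rint_ge0 (D : set R) (f : R -> R) : measurable D ->
  measurable_fun setT f -> {ae mu, forall x, D x -> 0 <= f x} ->
  0 <= \int[mu]_(x in D) f x.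
Proof.
move=> mD mf hf; rewrite /Rintegral; apply: fine_ge0.
have mfD : measurable_fun D f by exact: measurable_funS mf.
have E : (\int[mu]_(x in D) (f x)%:E = \int[mu]_(x in D) (Num.max (f x) 0)%:E)%E.
  apply: ae_eq_integral => //.
  - by apply/measurable_EFinP.
  - apply/measurable_EFinP; apply: (@measurable_maxr _ _ _ _ f (cst 0)) => //; exact: measurable_cst.
  - apply: ae_mono hf => x H Dx; congr EFin.
    by rewrite max_l // H.
by rewrite E; apply: integral_ge0 => x _; rewrite lee_fin le_max lexx orbT.
Qed.

Lemma AC_cont (g dg : R -> R) :
  (forall a b, mu.-integrable `[a, b] (EFin \o dg)) ->
  (forall x y, x <= y -> g y - g x = \int[mu]_(t in `[x, y]) dg t) ->
  forall t, {for t, continuous g}.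
Proof.
move=> idg hg t.
have ab : t - 1 < t + 1 by lra.
apply: (within_continuous_continuous ab); last first.
  by rewrite in_itv /=; apply/andP; split; lra.
have hc := parameterized_integral_continuous (ltW ab) (idg (t - 1) (t + 1)).
have hc2 : {within `[t - 1, t + 1], continuous
   ((fun x => parameterized_integral mu (t - 1) x dg) + cst (g (t - 1)))}.
  apply: within_continuousD => //; exact: cst_continuous.
apply: (subspace_eq_continuous _ hc2) => x; rewrite inE /= in_itv /= => /andP[x1 _].
rewrite /from_subspace /= /parameterized_integral; have h := hg _ _ x1; rewrite /= in h.
rewrite !fctE /=. lra.
Qed.


Lemma cont_eps (g : R -> R) (s e : R) : {for s, continuous g} -> 0 < e ->
  exists2 d, 0 < d & forall t, `|s - t| < d -> `|g s - g t| < e.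
Proof.
move=> gc e0.
move: gc => /cvgrPdist_lt/(_ e e0).
case/nbhs_ballP => d /= d0 hd; exists d => // t st; apply: hd.
Qed.

Lemma topo_fwd (g : R -> R) (x0 : R) : (forall t, {for t, continuous g}) ->
  0 < g x0 ->
  (forall y, x0 <= y -> (forall t, x0 <= t <= y -> 0 < g t) -> g x0 <= g y) ->
  forall y1, x0 <= y1 -> g x0 <= g y1.
Proof.
move=> gc g0 P y1 xy1.
pose A := [set y | (x0 <= y <= y1) /\ forall t, x0 <= t <= y -> 0 < g t].
have A0 : A x0.
  split; first by rewrite lexx xy1.
  by move=> t /andP[h1 h2]; have -> : t = x0 by apply/eqP; rewrite eq_le h1 h2.
have hs : has_sup A.
  by split; [exists x0 | exists y1 => y [/andP[_ ?] _]].
pose s := sup A.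
have ge0 : 0 < g x0 / 2 by rewrite divr_gt0.
have [d d0 hd] := @cont_eps g s _ (gc s) ge0.
have [y Ay sy] := sup_adherent d0 hs.
have ys : y <= s := sup_upper_bound hs Ay.
have {sy} sy : s - d < y := sy.
case: Ay => /andP[xy yy1] Ay.
have Py := P y xy Ay.
have hsy : `|g s - g y| < g x0 / 2.
  by apply: hd; rewrite ger0_norm ?subr_ge0 //; lra.
have claim : forall z, y <= z -> z <= s + d / 2 -> z <= y1 -> A z.
  move=> z yz zs zy1; split; first by apply/andP; split => //; lra.
  move=> t /andP[xt tz].
  have [ty|yt] := leP t y; first by apply: Ay; rewrite xt ty.
  have := hd t; rewrite ltr_norml.
  have -> : (- d < s - t < d) = true by apply/andP; split; lra.
  move=> /(_ isT); rewrite ltr_norml => /andP[h1 h2].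
  move: hsy; rewrite ltr_norml => /andP[h3 h4].
  lra.
have [h|h] := leP y1 (s + d / 2).
  have [_ Ay1] := claim y1 yy1 h (lexx _).
  exact: P.
have yle : y <= s + d / 2 by lra.
have As := claim (s + d / 2) yle (lexx _) (ltW h).
have := sup_upper_bound hs As.
rewrite -/s; lra.
Qed.


Lemma topo_bwd (g : R -> R) (x0 : R) : (forall t, {for t, continuous g}) ->
  0 < g x0 ->
  (forall y, y <= x0 -> (forall t, y <= t <= x0 -> 0 < g t) -> g x0 <= g y) ->
  forall y1, y1 <= x0 -> g x0 <= g y1.
Proof.
move=> gc g0 P y1 yx.
have hc : forall t, {for t, continuous (fun t => g (- t))}.
  move=> t; apply: (@continuous_comp _ _ _ (fun t : R => - t) g).
    exact: opp_continuous.
  exact: gc.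
have := @topo_fwd (fun t => g (- t)) (- x0) hc.
rewrite !opprK => /(_ g0) H0.
rewrite -[y1]opprK; apply: H0; last by rewrite lerN2.
move=> y xy H; apply: P; first by rewrite -lerN2 opprK.
move=> t /andP[h1 h2]; rewrite -[t]opprK; apply: H.
by rewrite lerN2 h2 /= -lerN2 opprK.
Qed.


Definition ACp (g dg : R -> R) := [/\ measurable_fun setT g,
  (\int[mu]_x ((g x) ^+ 2)%:E < +oo)%E, measurable_fun setT dg,
  (\int[mu]_x ((dg x) ^+ 2)%:E < +oo)%E &
  forall x y, x <= y -> g y - g x = \int[mu]_(t in `[x, y]) dg t].

Lemma ACN (g dg : R -> R) : ACp g dg -> ACp (fun x => - g x) (fun x => - dg x).
Proof.
move=> [mg gi mdg dgi Hg]; split.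
- exact: measurable_funN.
- by under eq_integral do rewrite sqrrN.
- exact: measurable_funN.
- by under eq_integral do rewrite sqrrN.
- move=> x y xy.
  have -> : \int[mu]_(t in `[x, y]) (- dg t) = \int[mu]_(t in `[x, y]) ((-1) * dg t).
    by apply: eq_Rintegral => t _; rewrite mulN1r.
  rewrite RintegralZl //; last exact: locint.
  rewrite -Hg //; ring.
Qed.

Lemma nonint (g : R -> R) (A : set R) (c : R) : measurable_fun setT g ->
  (\int[mu]_x ((g x) ^+ 2)%:E < +oo)%E -> measurable A -> mu A = +oo%E ->
  0 < c -> (forall y, A y -> c <= g y ^+ 2) -> False.
Proof.
move=> mg gi mA muA c0 H.
have mg2 : measurable_fun setT (fun x => (g x ^+ 2)%:E).
  by apply/measurable_EFinP; exact: measurable_funX.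
have : (\int[mu]_(x in A) (cst c%:E) x <= \int[mu]_x (g x ^+ 2)%:E)%E.
  apply: (@le_trans _ _ (\int[mu]_(x in A) (g x ^+ 2)%:E)%E).
    apply: ge0_le_integral => //; first [by move=> x _; rewrite lee_fin ltW |
      exact: measurable_funS mg2 | by move=> x Ax; rewrite lee_fin H].
  apply: (ge0_subset_integral mu mA measurableT mg2 _ (@subsetT _ A)).
  by move=> x _; rewrite lee_fin sqr_ge0.
rewrite integral_cst // => H1; have := le_lt_trans H1 gi.
set M := (X in (_ * X)%E); have -> : M = +oo%E by exact: muA.
by rewrite gt0_muley ?lte_fin // ltxx.
Qed.


Definition sysae (g h dg dh n k : R -> R) :=
  \forall x \ae mu, dg x = n x * h x /\ dh x = k x * g x /\ 0 < n x /\ 0 < k x.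

Lemma fwd (g h dg dh n k : R -> R) x0 : ACp g dg -> ACp h dh ->
  sysae g h dg dh n k -> 0 < g x0 -> 0 <= h x0 ->
  forall y, x0 <= y -> g x0 <= g y.
Proof.
move=> [mg gi mdg dgi Hg] [mh hi mdh dhi Hh] hae g0 h0.
apply: topo_fwd => //.
  move=> t; exact: (@AC_cont g dg (@locint dg mdg dgi) Hg t).
move=> y xy pos.
have hh : forall t, x0 <= t <= y -> h x0 <= h t.
  move=> t /andP[xt ty]; rewrite -subr_ge0 Hh //.
  apply: ae_Rint_ge0; [exact: measurable_itv | exact: mdh |].
  apply: ae_mono hae => x [_ [-> [_ kx]]]; rewrite /= in_itv /= => /andP[h1 h2].
  apply: mulr_ge0; first exact: ltW.
  apply: ltW; apply: pos; rewrite h1 /=; exact: le_trans h2 ty.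
rewrite -subr_ge0 Hg //.
apply: ae_Rint_ge0; [exact: measurable_itv | exact: mdg |].
apply: ae_mono hae => x [-> [_ [nx _]]]; rewrite /= in_itv /= => /andP[h1 h2].
apply: mulr_ge0; first exact: ltW.
by apply: le_trans h0 (hh x _); rewrite h1 h2.
Qed.

Lemma bwd (g h dg dh n k : R -> R) x0 : ACp g dg -> ACp h dh ->
  sysae g h dg dh n k -> 0 < g x0 -> h x0 <= 0 ->
  forall y, y <= x0 -> g x0 <= g y.
Proof.
move=> ACg ACh hae g0 h0.
have [mg gi mdg dgi Hg] := ACg; have [mh hi mdh dhi Hh] := ACh.
have [_ _ mdgN _ HgN] := @ACN _ _ ACg.
apply: topo_bwd => //.
  move=> t; exact: (@AC_cont g dg (@locint dg mdg dgi) Hg t).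
move=> y yx pos.
have hh : forall t, y <= t <= x0 -> h t <= h x0.
  move=> t /andP[yt tx]; rewrite -subr_ge0 Hh //.
  apply: ae_Rint_ge0; [exact: measurable_itv | exact: mdh |].
  apply: ae_mono hae => x [_ [-> [_ kx]]]; rewrite /= in_itv /= => /andP[h1 h2].
  apply: mulr_ge0; first exact: ltW.
  apply: ltW; apply: pos; rewrite h2 andbT; exact: le_trans yt h1.
have : 0 <= - g x0 - - g y.
  rewrite HgN //.
  apply: ae_Rint_ge0; [exact: measurable_itv | exact: mdgN |].
  apply: ae_mono hae => x [-> [_ [nx _]]]; rewrite /= in_itv /= => /andP[h1 h2].
  rewrite -mulrN; apply: mulr_ge0; first exact: ltW.
  rewrite oppr_ge0; apply: le_trans (hh x _) h0; by rewrite h1 h2.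
lra.
Qed.

Lemma pos_false (g h dg dh n k : R -> R) x0 : ACp g dg -> ACp h dh ->
  sysae g h dg dh n k -> 0 < g x0 -> False.
Proof.
move=> ACg ACh hae g0.
have [mg gi _ _ _] := ACg.
have [h0|h0] := leP 0 (h x0).
  have H := @fwd _ _ _ _ _ _ x0 ACg ACh hae g0 h0.
  apply: (@nonint g `[x0, +oo[ (g x0 ^+ 2) mg gi (measurable_itv _)).
  - have := lebesgue_measure_itv `[x0, +oo[; rewrite /= ltry => ->.
    by [].
  - exact: exprn_gt0.
  - move=> y; rewrite /= in_itv /= andbT => /H xy; nra.
have H := @bwd _ _ _ _ _ _ x0 ACg ACh hae g0 (ltW h0).
apply: (@nonint g `]-oo, x0] (g x0 ^+ 2) mg gi (measurable_itv _)).
- have := lebesgue_measure_itv `]-oo, x0]; rewrite /= ltNyr => ->.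
  by [].
- exact: exprn_gt0.
- move=> y; rewrite /= in_itv /= => /H xy; nra.
Qed.

Lemma core (g h dg dh n k : R -> R) : ACp g dg -> ACp h dh ->
  sysae g h dg dh n k -> forall x, g x = 0 /\ h x = 0.
Proof.
move=> ACg ACh hae.
have hae2 : sysae (fun x => - g x) (fun x => - h x) (fun x => - dg x)
   (fun x => - dh x) n k.
  by apply: ae_mono hae => x [-> [-> [? ?]]]; split; [|split]; rewrite ?mulrN.
have hae3 : sysae h g dh dg k n.
  by apply: ae_mono hae => x [-> [-> [? ?]]].
have hae4 : sysae (fun x => - h x) (fun x => - g x) (fun x => - dh x)
   (fun x => - dg x) k n.
  by apply: ae_mono hae2 => x [-> [-> [? ?]]].
move=> x; split.
- have [gx|gx|//] := ltgtP (g x) 0.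
    exfalso; apply: (@pos_false _ _ _ _ _ _ x (@ACN _ _ ACg) (@ACN _ _ ACh) hae2); lra.
  exfalso; exact: (@pos_false _ _ _ _ _ _ x ACg ACh hae).
- have [gx|gx|//] := ltgtP (h x) 0.
    exfalso; apply: (@pos_false _ _ _ _ _ _ x (@ACN _ _ ACh) (@ACN _ _ ACg) hae4); lra.
  exfalso; exact: (@pos_false _ _ _ _ _ _ x ACh ACg hae3).
Qed.


Lemma muT_gt0 : (0 < mu [set: R])%E.
Proof.
have := lebesgue_measure_itv (`]-oo, +oo[ : interval R).
rewrite set_itvNyy /= => E.
have -> : mu [set: R] = +oo%E by exact: E.
by [].
Qed.

Lemma linf_lt (f : R -> R) r : (Linf_norm f < r%:E)%E ->
  \forall x \ae mu, `|f x| < r.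
Proof.
rewrite /Linf_norm unlock /= ifT; last exact: muT_gt0.
move=> H; apply: ae_mono (ess_sup_ge mu (abse \o (EFin \o f))) => x /= hx.
by rewrite -lte_fin; exact: le_lt_trans hx H.
Qed.

Lemma linf_le0 (f : R -> R) : (\forall x \ae mu, f x = 0) ->
  (Linf_norm f <= 0)%E.
Proof.
move=> H; rewrite /Linf_norm unlock /= ifT; last exact: muT_gt0.
apply/ess_supP; apply: ae_mono H => x /= ->.
by rewrite normr0.
Qed.


Lemma eqs (um up lam : R) (z1 z2 d1 d2 : R[i]) :
  - ((um)%:C)%C * z1 + 'i%C * d2 = (lam%:C)%C * z1 /\
  'i%C * d1 - ((up)%:C)%C * z2 = (lam%:C)%C * z2 ->
  [/\ complex.Re d1 = (lam + up) * complex.Im z2,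
      complex.Im d2 = (- (lam + um)) * complex.Re z1,
      - complex.Im d1 = (lam + up) * complex.Re z2 &
      complex.Re d2 = (- (lam + um)) * (- complex.Im z1)].
Proof.
case: z1 z2 d1 d2 => [a b] [p q] [da db] [dp dq] [E1 E2].
have := congr1 (@complex.Re R) E1; have := congr1 (@complex.Im R) E1.
have := congr1 (@complex.Re R) E2; have := congr1 (@complex.Im R) E2.
rewrite /= => e1 e2 e3 e4.
split; lra.
Qed.

Lemma cplx0 (z : R[i]) : complex.Re z = 0 -> complex.Im z = 0 -> z = 0.
Proof. by case: z => a b /= -> ->. Qed.


Lemma part1 (um up : R -> R) (lam : R) : is_eigenvalue um up lam -> forall c : R,
  (((c - lam)%R)%:E <= Linf_norm (pospart (fun x => (um x + c)%R)))%E \/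
  (((c + lam)%R)%:E <= Linf_norm (negpart (fun x => (up x - c)%R)))%E.
Proof.
move=> [psi1 [psi2 [dpsi1 [dpsi2 [H1 [H2 [Hnz Heq]]]]]]] c.
have [h1|h1] := leP ((c - lam)%:E) (Linf_norm (pospart (fun x => um x + c))).
  by left.
have [h2|h2] := leP ((c + lam)%:E) (Linf_norm (negpart (fun x => up x - c))).
  by right.
exfalso.
have a1 := @linf_lt _ _ h1; have a2 := @linf_lt _ _ h2.
pose n := fun x => lam + up x; pose k := fun x => - (lam + um x).
have pos : \forall x \ae mu, 0 < n x /\ 0 < k x.
  apply: ae_mono2 a1 a2 => x; rewrite /pospart /negpart => e1 e2.
  have u1 : um x + c <= `|Num.max (um x + c) 0|.
    by apply: le_trans (ler_norm _); rewrite le_max lexx.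
  have u2 : - (up x - c) <= `|Num.max (- (up x - c)) 0|.
    by apply: le_trans (ler_norm _); rewrite le_max lexx.
  rewrite /n /k; split; lra.
move: H1 H2 => [[[ma ia] [mb ib]] [[[mda ida] [mdb idb]] I1]].
move=> [[[mp ip] [mq iq]] [[[mdp idp] [mdq idq]] I2]].
have ACa : ACp (fun x => complex.Re (psi1 x)) (fun x => complex.Re (dpsi1 x)).
  by split => // x y xy; exact: (I1 x y xy).1.
have ACb : ACp (fun x => complex.Im (psi1 x)) (fun x => complex.Im (dpsi1 x)).
  by split => // x y xy; exact: (I1 x y xy).2.
have ACp' : ACp (fun x => complex.Re (psi2 x)) (fun x => complex.Re (dpsi2 x)).
  by split => // x y xy; exact: (I2 x y xy).1.
have ACq : ACp (fun x => complex.Im (psi2 x)) (fun x => complex.Im (dpsi2 x)).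
  by split => // x y xy; exact: (I2 x y xy).2.
have sys1 : sysae (fun x => complex.Re (psi1 x)) (fun x => complex.Im (psi2 x))
    (fun x => complex.Re (dpsi1 x)) (fun x => complex.Im (dpsi2 x)) n k.
  apply: ae_mono2 Heq pos => x E [nx kx].
  have [e1 e2 e3 e4] := @eqs (um x) (up x) lam _ _ _ _ E.
  by split; [exact: e1 | split; [exact: e2 | split]].
have sys2 : sysae (fun x => - complex.Im (psi1 x)) (fun x => complex.Re (psi2 x))
    (fun x => - complex.Im (dpsi1 x)) (fun x => complex.Re (dpsi2 x)) n k.
  apply: ae_mono2 Heq pos => x E [nx kx].
  have [e1 e2 e3 e4] := @eqs (um x) (up x) lam _ _ _ _ E.
  by split; [exact: e3 | split; [exact: e4 | split]].
have C1 := @core _ _ _ _ _ _ ACa ACq sys1.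
have C2 := @core _ _ _ _ _ _ (@ACN _ _ ACb) ACp' sys2.
apply: Hnz; apply: aeW => x; split; apply: cplx0.
- exact: (C1 x).1.
- by apply/eqP; rewrite -oppr_eq0; apply/eqP; exact: (C2 x).1.
- exact: (C2 x).2.
- exact: (C1 x).2.
Qed.

End Aux.

Theorem theorem2p3 (R : realType) (um up : R -> R) :
  in_Linf um -> in_Linf up ->
  (forall lam : R, is_eigenvalue um up lam ->
     forall c : R,
       (((c - lam)%R)%:E <= Linf_norm (pospart (fun x => (um x + c)%R)))%E \/
       (((c + lam)%R)%:E <= Linf_norm (negpart (fun x => (up x - c)%R)))%E) /\
  (forall c : R, 0 < c ->
     (\forall x \ae (@lebesgue_measure R), c <= up x /\ c <= - um x) ->
     forall lam : R, - c < lam < c -> ~ is_eigenvalue um up lam).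
Proof.
move=> _ _; split.
  by move=> lam H c; exact: (@part1 R um up lam H c).
move=> c c0 hae lam /andP[l1 l2] Heig.
have [h|h] := @part1 R um up lam Heig c.
- have : (Linf_norm (pospart (fun x => (um x + c)%R)) <= 0)%E.
    apply: (@linf_le0 R); apply: (@ae_mono R) hae => x [_ h2]; rewrite /pospart.
    by rewrite max_r //; lra.
  move=> h'; have := le_trans h h'; rewrite lee_fin; lra.
- have : (Linf_norm (negpart (fun x => (up x - c)%R)) <= 0)%E.
    apply: (@linf_le0 R); apply: (@ae_mono R) hae => x [h1 _]; rewrite /negpart.
    by rewrite max_r //; lra.
  move=> h'; have := le_trans h h'; rewrite lee_fin; lra.
Qed.
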